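(* Let $(a_n)_{n<0}$ be a sequence in $\mathbb{Z}((q))$ satisfying the lower bound condition, and for $j\in\mathbb{Z}$ define \[ r_j=-\sum_{k\ge|j|}a_{-k-1}\frac{(-1)^{k+j}q^{\binom{k+1}{2}+\binom{j+1}{2}}}{(q;q)_{k+j}(q;q)_{k-j}}\in\mathbb{Z}((q)). \] Then the series $\sum_{j\in\mathbb{Z}}r_j$ converges in $\mathbb{Z}((q))$ and \[ \sum_{j\in\mathbb{Z}}r_j=-a_{-1}. \]
   Context: $(a;q)_n=\prod_{i=0}^{n-1}(1-aq^i)$; $\binom{j+1}{2}=\frac{j(j+1)}{2}$ for all integers $j$. For $f\in\mathbb{Z}((q))$, $\delta(f)$ is the minimal exponent of $q$ in $f$. The lower bound condition: there is a constant $C$ with $\delta(a_n)\ge-\frac{n(n+3)}{2}+C$ for all $n<0$. Interpretation: $r_j$ is the term-by-term residue at $x=q^j$ of the inverted Habiro series $P(x)=\sum_{k\ge0}a_{-k-1}\frac{(-1)^kq^{\binom{k+1}{2}}}{(x;q)_{k+1}(qx^{-1};q)_k}$, and $a_{-1}$ (which equals $f_0$, the constant coefficient of its expansion at $x=0$) is its term-by-term residue at $x=\infty$. *)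

(* Defs.v *)
From mathcomp Require Import all_boot all_order all_algebra.
Set Implicit Arguments. Unset Strict Implicit. Unset Printing Implicit Defensive.
Import Order.TTheory GRing.Theory Num.Theory.
Local Open Scope ring_scope.

(* A Laurent series f in Z((q)) is represented by a pair (L, c):
   its coefficient of q^n is c n for n >= L and 0 for n < L.
   Two representations denote the same series iff all [coef] agree. *)
Definition laurent := (int * (int -> int))%type.

Definition coef (f : laurent) (n : int) : int := if n < f.1 then 0 else f.2 n.

Definition isum (a b : int) (F : int -> int) : int :=
  if a <= b then \sum_(0 <= t < absz (b - a + 1)) F (a + t%:Z) else 0.

Definition lzero : laurent := (0, fun _ => 0).
Definition lmono (e : int) (c : int) : laurent := (e, fun n => if n == e then c else 0).
Definition lconst (c : int) : laurent := lmono 0 c.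
Definition ladd (f g : laurent) : laurent :=
  (Num.min f.1 g.1, fun n => coef f n + coef g n).
Definition lopp (f : laurent) : laurent := (f.1, fun n => - coef f n).
(* Cauchy product; coefficients of f vanish below f.1, of g below g.1 *)
Definition lmul (f g : laurent) : laurent :=
  (f.1 + g.1, fun n => isum f.1 (n - g.1) (fun i => coef f i * coef g (n - i))).

Definition one_minus_qpow (i : nat) : laurent :=
  (0, fun n => (if n == 0 then 1 else 0) - (if n == i%:Z then 1 else 0)).

Definition qpoch (m : nat) : laurent :=
  foldr (fun i acc => lmul (one_minus_qpow i) acc) (lconst 1) (iota 1 m).

(* Inverse of a power series u with constant term 1:
   v_0 = 1, v_n = - sum_{i=1}^n u_i v_{n-i}.  pinv_list u n = [v_0; ...; v_n]. *)
Fixpoint pinv_list (u : nat -> int) (n : nat) : seq int :=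
  match n with
  | 0 => [:: 1]
  | n'.+1 => let s := pinv_list u n' in
             rcons s (- \sum_(1 <= i < n'.+2) u i * nth 0 s (n'.+1 - i))
  end.

Definition pinv (f : laurent) : laurent :=
  (0, fun n => nth 0 (pinv_list (fun i => coef f i%:Z) (absz n)) (absz n)).

(* binom(j+1,2) = j(j+1)/2 for all integers j *)
Definition binom2 (j : int) : int := divz (j * (j + 1)) 2.

Definition val_ge (f : laurent) (b : int) : Prop :=
  forall m : int, m < b -> coef f m = 0.

Definition psum (F : nat -> laurent) (M : nat) : laurent :=
  \big[ladd/lzero]_(k < M) F k.

Definition HasSumN (F : nat -> laurent) (s : laurent) : Prop :=
  forall N : int, exists M : nat, forall M' : nat, (M <= M')%N ->
    forall n : int, n < N -> coef (psum F M') n = coef s n.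

Definition HasSumZ (r : int -> laurent) (s : laurent) : Prop :=
  exists s1 s2 : laurent,
    HasSumN (fun t => r t%:Z) s1 /\
    HasSumN (fun t => r (- (t.+1)%:Z)) s2 /\
    forall n : int, coef s n = coef s1 n + coef s2 n.

Definition rterm (a : int -> laurent) (j : int) (k : nat) : laurent :=
  if (`|j| <= k%:Z) then
    lopp (lmul (a (- (k%:Z) - 1))
           (lmul (lmono (binom2 k%:Z + binom2 j) ((-1) ^ (k%:Z + j)))
                 (lmul (pinv (qpoch (absz (k%:Z + j))))
                       (pinv (qpoch (absz (k%:Z - j)))))))
  else lzero.

(* Main.v *)
Require Import Defs.
From mathcomp Require Import all_boot all_order all_algebra.
From mathcomp Require Import zify ring lra.
Import Order.TTheory GRing.Theory Num.Theory.
Local Open Scope ring_scope.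

Lemma isum0 a b (F : int -> int) : (forall i, a <= i <= b -> F i = 0) -> isum a b F = 0.
Proof.
move=> H; rewrite /isum; case: ifP => // hab.
rewrite big_nat_cond big1 // => t /andP[/andP[_ ht] _]; apply: H; lia.
Qed.

Lemma isum_full (a b lo : int) (W : nat) (F : int -> int) : lo <= a -> b < lo + W%:Z ->
  (forall i, F i != 0 -> a <= i <= b) -> isum a b F = \sum_(t < W) F (lo + t%:Z).
Proof.
move=> hlo hW hS.
have Z : forall i, ~~ (a <= i <= b) -> F i = 0.
  by move=> i hi; apply/eqP; apply: contraNT hi => /hS.
rewrite /isum; case: ifP => hab; last first.
  rewrite big1 // => t _; apply: Z; lia.
set d := absz (a - lo); set L := absz (b - a + 1).
have hd : d%:Z = a - lo by rewrite /d; lia.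
have hL : L%:Z = b - a + 1 by rewrite /L; lia.
have hdL : (d + L <= W)%N by lia.
rewrite -(big_mkord xpredT (fun t => F (lo + t%:Z))).
rewrite (@big_cat_nat _ _ _ d 0 W) /=; [|lia|lia].
rewrite [X in _ = X + _]big_nat_cond [X in _ = X + _]big1 ?add0r; last first.
  move=> t /andP[/andP[_ ht] _]; apply: Z; lia.
rewrite (@big_cat_nat _ _ _ (d + L) d W) /=; [|lia|lia].
rewrite [X in _ = _ + X]big_nat_cond [X in _ = _ + X]big1 ?addr0; last first.
  move=> t /andP[/andP[ht _] _]; apply: Z; lia.
rewrite -{1}(add0n d) big_addn addKn.
apply: eq_bigr => t _; congr F; lia.
Qed.

Lemma isum_supp a b a' b' (F : int -> int) :
  (forall i, F i != 0 -> a <= i <= b) -> (forall i, F i != 0 -> a' <= i <= b') ->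
  isum a b F = isum a' b' F.
Proof.
move=> h1 h2.
set lo := Num.min a a'.
set W := (absz (b - lo) + absz (b' - lo) + 1)%N.
rewrite (@isum_full a b lo W) //; last by rewrite /W /lo; lia.
  by rewrite (@isum_full a' b' lo W) // /W /lo; lia.
by rewrite /lo; lia.
Qed.

Lemma isum1 n (F : int -> int) : isum n n F = F n.
Proof. by rewrite /isum lexx subrr add0r /= big_nat1 addr0. Qed.

Lemma isum_sumr (I : Type) (r : seq I) a b (F : I -> int -> int) :
  \sum_(t <- r) isum a b (F t) = isum a b (fun i => \sum_(t <- r) F t i).
Proof.
rewrite /isum; case: ifP => _; last by rewrite big1.
by rewrite exchange_big.
Qed.

Lemma isumMl c a b (F : int -> int) : c * isum a b F = isum a b (fun i => c * F i).
Proof. by rewrite /isum; case: ifP => _; rewrite ?mulr0 // mulr_sumr. Qed.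

Lemma coef_lt f n : n < f.1 -> coef f n = 0.
Proof. by rewrite /coef => ->. Qed.

Lemma coef_nz {f n} : coef f n != 0 -> f.1 <= n.
Proof. by rewrite /coef; case: ltP => // _; rewrite eqxx. Qed.

Lemma coef_ladd f g n : coef (ladd f g) n = coef f n + coef g n.
Proof.
rewrite /coef /ladd /=; case: ifP => // h.
have [h1 h2] : n < f.1 /\ n < g.1 by split; lia.
by rewrite h1 h2 addr0.
Qed.

Lemma coef_lopp f n : coef (lopp f) n = - coef f n.
Proof. rewrite /coef /=; case: ifP => [_|h]; first by rewrite oppr0. by rewrite /coef h. Qed.

Lemma coef_lzero n : coef lzero n = 0.
Proof. by rewrite /coef /=; case: ifP. Qed.

Lemma coef_lmono e c n : coef (lmono e c) n = if n == e then c else 0.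
Proof.
rewrite /coef /=; case: ifP => // h; case: eqP => // E; move: h; rewrite E ltxx.
by [].
Qed.

Lemma coef_psum F M n : coef (psum F M) n = \sum_(k < M) coef (F k) n.
Proof.
rewrite /psum; elim: (index_enum _) => [|k r IH]; first by rewrite !big_nil coef_lzero.
by rewrite !big_cons coef_ladd IH.
Qed.

Lemma val_ge_mono f a b : val_ge f a -> b <= a -> val_ge f b.
Proof. by move=> h hb m hm; apply: h; lia. Qed.

Lemma val_ge_fst f b : b <= f.1 -> val_ge f b.
Proof. by move=> h m hm; apply: coef_lt; lia. Qed.

Lemma val_lmul f g a b : val_ge f a -> val_ge g b -> val_ge (lmul f g) (a + b).
Proof.
move=> hf hg n hn; rewrite /coef /lmul /=; case: ifP => // _.
apply: isum0 => i _; case: (ltP i a) => hi; first by rewrite hf // mul0r.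
by rewrite hg ?mulr0 //; lia.
Qed.

Lemma coef_lmul_gen f g n : val_ge g 0 ->
  coef (lmul f g) n = isum f.1 n (fun i => coef f i * coef g (n - i)).
Proof.
move=> hg; rewrite {1}/coef /lmul /=.
have S : forall i, coef f i * coef g (n - i) != 0 ->
    [/\ f.1 <= i, g.1 <= n - i & 0 <= n - i].
  move=> i; rewrite mulf_eq0 negb_or => /andP[h1 h2]; split.
  - exact: coef_nz h1.
  - exact: coef_nz h2.
  - by case: (ltP (n - i) 0) h2 => // h; rewrite hg.
case: ifP => h.
  symmetry; apply: isum0 => i _; apply/eqP; apply: contraT => /S[]; lia.
apply: isum_supp => i /S[]; lia.
Qed.

Lemma coef_lmul_ps f g (m : nat) : val_ge f 0 -> val_ge g 0 ->
  coef (lmul f g) m%:Z = \sum_(j < m.+1) coef f j%:Z * coef g (m - j)%N%:Z.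
Proof.
move=> hf hg; rewrite coef_lmul_gen //.
have -> : \sum_(j < m.+1) coef f j%:Z * coef g (m - j)%N%:Z =
          isum 0 m (fun i => coef f i * coef g (m%:Z - i)).
  rewrite /isum (_ : (0 <= m%:Z) = true); last by lia.
  rewrite subr0 big_mkord.
  have -> : absz (m%:Z + 1) = m.+1 by lia.
  apply: eq_bigr => j _; rewrite add0r; congr (_ * coef g _); 
  have := ltn_ord j; lia.
apply: isum_supp => i; rewrite mulf_eq0 negb_or => /andP[h1 h2].
  have := coef_nz h1; have := coef_nz h2.
  case: (ltP i 0) h1 => hi; first by rewrite hf.
  case: (ltP (m%:Z - i) 0) h2 => hmi; first by rewrite hg.
  lia.
case: (ltP i 0) h1 => hi; first by rewrite hf.
case: (ltP (m%:Z - i) 0) h2 => hmi; first by rewrite hg.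
lia.
Qed.

Definition tr (N : nat) (p : {poly int}) : {poly int} := \poly_(i < N) p`_i.
Definition pf (N : nat) (f : laurent) : {poly int} := \poly_(i < N) coef f i%:Z.

Lemma coef_tr N p i : (tr N p)`_i = if (i < N)%N then p`_i else 0.
Proof. by rewrite coef_poly. Qed.

Lemma coef_pf N f i : (pf N f)`_i = if (i < N)%N then coef f i%:Z else 0.
Proof. by rewrite coef_poly. Qed.

Lemma tr_mull N p q : tr N (tr N p * q) = tr N (p * q).
Proof.
apply/polyP => i; rewrite !coef_tr; case: ifP => // hi.
rewrite !coefM; apply: eq_bigr => j _; rewrite coef_tr.
have hj := ltn_ord j.
have h1 : (j < N)%N by lia.
by rewrite h1.
Qed.

Lemma tr_mulr N p q : tr N (p * tr N q) = tr N (p * q).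
Proof. by rewrite mulrC tr_mull mulrC. Qed.

Lemma trM N p q : tr N (p * q) = tr N (tr N p * tr N q).
Proof. by rewrite tr_mull tr_mulr. Qed.

Lemma tr_add N p q : tr N (p + q) = tr N p + tr N q.
Proof. by apply/polyP => i; rewrite coefD !coef_tr coefD; case: (i < N)%N; rewrite ?addr0. Qed.

Lemma tr0 N : tr N 0 = 0.
Proof. by apply/polyP => i; rewrite coef_tr coef0; case: ifP. Qed.

Lemma tr_sum N (I : Type) (r : seq I) (F : I -> {poly int}) :
  tr N (\sum_(i <- r) F i) = \sum_(i <- r) tr N (F i).
Proof.
elim: r => [|x r IH]; first by rewrite !big_nil tr0.
by rewrite !big_cons tr_add IH.
Qed.

Lemma tr_tr N p : tr N (tr N p) = tr N p.
Proof. by apply/polyP => i; rewrite !coef_tr; case: (i < N)%N. Qed.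

Lemma tr_pf N f : tr N (pf N f) = pf N f.
Proof. by apply/polyP => i; rewrite coef_tr coef_pf; case: (i < N)%N. Qed.

Lemma pf_lmul N f g : val_ge f 0 -> val_ge g 0 ->
  pf N (lmul f g) = tr N (pf N f * pf N g).
Proof.
move=> hf hg; apply/polyP => i; rewrite coef_pf coef_tr; case: ifP => // hi.
rewrite coef_lmul_ps // coefM; apply: eq_bigr => j _; rewrite !coef_pf.
have hj := ltn_ord j.
have h1 : (j < N)%N by lia.
have h2 : (i - j < N)%N by lia.
by rewrite h1 h2.
Qed.

Lemma pf_lmono N e c : 0 <= e -> pf N (lmono e c) = tr N (c%:P * 'X^(absz e)).
Proof.
move=> he; apply/polyP => i; rewrite coef_pf coef_tr; case: ifP => // _.
rewrite coef_lmono coefCM coefXn.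
have -> : (i%:Z == e) = (i == absz e) by apply/eqP/eqP; lia.
by case: eqP; rewrite ?mulr1 ?mulr0.
Qed.

Lemma pf_omq N i : pf N (one_minus_qpow i) = tr N (1 - 'X^i).
Proof.
apply/polyP => j; rewrite coef_pf coef_tr; case: ifP => // _.
rewrite /coef /= coefB coef1 coefXn.
have -> : (j%:Z == 0) = (j == 0)%N by apply/eqP/eqP; lia.
have -> : (j%:Z == i%:Z) = (j == i) by apply/eqP/eqP; lia.
by case: (j == 0)%N; case: (j == i).
Qed.

Definition Pq (m : nat) : {poly int} := \prod_(i <- iota 1 m) (1 - 'X^i).

Lemma qfold_fst s : (foldr (fun i acc => lmul (one_minus_qpow i) acc) (lconst 1) s).1 = 0.
Proof. by elim: s => [|x s IH] //=; rewrite IH. Qed.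

Lemma pf_qfold N s : pf N (foldr (fun i acc => lmul (one_minus_qpow i) acc) (lconst 1) s)
  = tr N (\prod_(i <- s) (1 - 'X^i)).
Proof.
elim: s => [|x s IH] /=.
  rewrite big_nil /lconst pf_lmono // mul1r expr0; congr tr.
rewrite pf_lmul; first by rewrite big_cons IH pf_omq -trM.
  exact: val_ge_fst.
by apply: val_ge_fst; rewrite qfold_fst.
Qed.

Lemma qpoch_fst m : (qpoch m).1 = 0.
Proof. exact: qfold_fst. Qed.

Lemma pf_qpoch N m : pf N (qpoch m) = tr N (Pq m).
Proof. exact: pf_qfold. Qed.

Lemma Pq0 m : (Pq m)`_0 = 1.
Proof.
rewrite -horner_coef0 /Pq horner_prod big_seq big1 // => i.
rewrite mem_iota => /andP[h1 _]; rewrite !hornerE expr0n.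
by case: i h1 => // i _; rewrite subr0.
Qed.

Lemma coef_qpoch0 m : coef (qpoch m) 0 = 1.
Proof.
have := coef_pf 1 (qpoch m) 0; rewrite pf_qpoch coef_tr /= Pq0.
by move=> <-.
Qed.

Lemma size_pinv_list u n : size (pinv_list u n) = n.+1.
Proof. by elim: n => [|n IH] //=; rewrite size_rcons IH. Qed.

Lemma nth_pinv_list u n i : (i <= n)%N ->
  nth 0 (pinv_list u n) i = nth 0 (pinv_list u i) i.
Proof.
elim: n => [|n IH]; first by rewrite leqn0 => /eqP ->.
rewrite leq_eqVlt => /orP[/eqP -> //|hi].
by rewrite /= nth_rcons size_pinv_list hi IH.
Qed.

Definition pv u i := nth 0 (pinv_list u i) i.

Lemma pv0 u : pv u 0 = 1.
Proof. by []. Qed.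

Lemma pvS u n : pv u n.+1 = - \sum_(1 <= i < n.+2) u i * pv u (n.+1 - i).
Proof.
rewrite /pv /= nth_rcons size_pinv_list ltnn eqxx; congr (- _).
rewrite big_nat_cond [RHS]big_nat_cond; apply: eq_bigr => i /andP[/andP[h1 h2] _].
by rewrite nth_pinv_list //; rewrite leq_subLR; lia.
Qed.

Lemma coef_pinv f (j : nat) : coef (pinv f) j%:Z = pv (fun i => coef f i%:Z) j.
Proof. by rewrite /coef /=. Qed.

Lemma pf_pinv N f : val_ge f 0 -> coef f 0 = 1 ->
  tr N (pf N (pinv f) * pf N f) = tr N 1.
Proof.
move=> hf h0; apply/polyP => m; rewrite !coef_tr; case: ifP => // hm.
rewrite mulrC coefM coef1.
set u := fun i : nat => coef f i%:Z.
have E : forall j : 'I_m.+1, (pf N f)`_j * (pf N (pinv f))`_(m - j) = u j * pv u (m - j).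
  move=> j; have hj := ltn_ord j; rewrite !coef_pf coef_pinv.
  have h1 : (j < N)%N by lia.
  have h2 : (m - j < N)%N by lia.
  by rewrite h1 h2.
rewrite (eq_bigr _ (fun j _ => E j)).
case: m hm {E} => [|n] hm; first by rewrite big_ord1 /u /= h0 pv0 mulr1.
rewrite big_ord_recl /= subn0 /u h0 mul1r pvS.
rewrite big_add1 /= big_mkord addrC; apply/eqP; rewrite subr_eq0; apply/eqP.
by apply: eq_bigr => i _; rewrite /bump /= add1n.
Qed.

Fixpoint qbin (n i : nat) : {poly int} :=
  match n, i with
  | _, 0 => 1
  | 0, _.+1 => 0
  | n'.+1, i'.+1 => qbin n' i'.+1 + 'X^(n' - i') * qbin n' i'
  end.

Lemma qbin_n0 n : qbin n 0 = 1.
Proof. by case: n. Qed.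

Lemma qbin_gt n i : (n < i)%N -> qbin n i = 0.
Proof.
elim: n i => [|n IH] [|i] //= h.
by rewrite !IH ?mulr0 ?addr0 //; lia.
Qed.

Lemma Pq0' : Pq 0 = 1.
Proof. by rewrite /Pq big_nil. Qed.

Lemma PqS m : Pq m.+1 = Pq m * (1 - 'X^(m.+1)).
Proof.
rewrite /Pq (_ : iota 1 m.+1 = iota 1 m ++ [:: m.+1]); last by rewrite -(addn1 m) iotaD /= (addnC 1 m).
by rewrite big_cat /= big_seq1.
Qed.

Lemma qbin_prod n i : (i <= n)%N -> Pq i * Pq (n - i) * qbin n i = Pq n.
Proof.
elim: n i => [|n IH] [|i] //= hi.
- by rewrite Pq0' !mul1r.
- by rewrite Pq0' !mul1r subn0 mulr1.
have T2 : Pq i.+1 * Pq (n - i) * ('X^(n - i) * qbin n i) =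
          (1 - 'X^(i.+1)) * 'X^(n - i) * Pq n.
  rewrite (PqS i) -(IH i); last by lia.
  ring.
have T1 : Pq i.+1 * Pq (n - i) * qbin n i.+1 = (1 - 'X^(n - i)) * Pq n.
  case: (ltnP i n) => hin.
    have -> : (n - i)%N = (n - i.+1).+1 by lia.
    rewrite (PqS (n - i.+1)) -(IH i.+1) //.
    ring.
  have -> : i = n by lia.
  by rewrite qbin_gt // subnn expr0 subrr mulr0 mul0r.
rewrite subSS mulrDr T1 T2.
have EX : 'X^(n - i) * 'X^(i.+1) = 'X^(n.+1) :> {poly int}.
  by rewrite -exprD; congr (_ ^+ _); lia.
rewrite (PqS n) -EX; ring.
Qed.

Definition qt (n s i : nat) : {poly int} :=
  (-1) ^+ i * 'X^('C(i, 2) + s * (n - i)) * qbin n i.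

Lemma qbin_thm n s : \sum_(i < n.+1) qt n s i = \prod_(t < n) ('X^s - 'X^t).
Proof.
elim: n => [|n IH].
  by rewrite big_ord1 big_ord0 /qt /= muln0 expr0 mul1r mulr1.
rewrite [RHS]big_ord_recr /= -IH.
have Hs : \sum_(i < n.+1) 'X^s * qt n s i = 'X^(s * n.+1) +
    \sum_(j < n.+1) (-1) ^+ j.+1 * 'X^('C(j.+1, 2) + s * (n - j)) * qbin n j.+1.
  rewrite big_ord_recl [in RHS]big_ord_recr /= qbin_gt // mulr0 addr0.
  congr (_ + _).
    by rewrite /qt /= subn0 qbin_n0 expr0 mul1r mulr1 add0n -exprD mulnS.
  apply: eq_bigr => j _; rewrite /qt /bump /= add1n.
  have hj := ltn_ord j.
  have -> : (s * (n - j))%N = (s + s * (n - j.+1))%N by rewrite -mulnS; congr (_ * _); lia.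
  rewrite !exprD; ring.
have Hn : \sum_(i < n.+1) 'X^n * qt n s i = - \sum_(j < n.+1)
    (-1) ^+ j.+1 * 'X^('C(j.+1, 2) + s * (n - j)) * ('X^(n - j) * qbin n j).
  rewrite -sumrN; apply: eq_bigr => j _; rewrite /qt.
  have hj := ltn_ord j.
  have -> : 'X^n = 'X^j * 'X^(n - j) :> {poly int} by rewrite -exprD; congr (_ ^+ _); lia.
  rewrite binS bin1 !exprD exprS; ring.
rewrite big_ord_recl /= {1}/qt /= subn0 expr0 mul1r ?qbin_n0 mulr1 add0n.
have -> : \sum_(i < n.+1) qt n.+1 s (bump 0 i) = 
   \sum_(j < n.+1) (-1) ^+ j.+1 * 'X^('C(j.+1, 2) + s * (n - j)) * qbin n j.+1 +
   \sum_(j < n.+1) (-1) ^+ j.+1 * 'X^('C(j.+1, 2) + s * (n - j)) * ('X^(n - j) * qbin n j).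
  rewrite -big_split /=; apply: eq_bigr => j _.
  by rewrite /qt /bump /= add1n subSS -mulrDr.
rewrite mulrBr !mulr_suml.
rewrite [X in _ = X - _](eq_bigr (fun i : 'I_n.+1 => 'X^s * qt n s i)) => [|i _]; last by rewrite mulrC.
rewrite [X in _ = _ - X](eq_bigr (fun i : 'I_n.+1 => 'X^n * qt n s i)) => [|i _]; last by rewrite mulrC.
by rewrite Hs Hn opprK addrA.
Qed.

Lemma half_exists x : exists t : int, x * (x + 1) = t * 2.
Proof.
have hx := divz_eq x 2.
have h0 := @modz_ge0 x 2 isT. have h1 := @ltz_pmod x 2 isT.
move: (x %/ 2)%Z (x %% 2)%Z hx h0 h1 => q r hx h0 h1.
have [Er|Er] : r = 0 \/ r = 1 by lia.
  by exists (q * (q * 2 + 1)); rewrite hx Er; ring.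
by exists ((q * 2 + 1) * (q + 1)); rewrite hx Er; ring.
Qed.

Lemma binom2E x : binom2 x * 2 = x * (x + 1).
Proof.
have [t ht] := half_exists x.
by rewrite /binom2 ht mulzK.
Qed.

Lemma binom2_ge0 x : 0 <= binom2 x.
Proof. have := binom2E x; nia. Qed.

Lemma bin2E i : ('C(i, 2) * 2)%:Z = i%:Z * (i%:Z - 1).
Proof.
elim: i => [|i IH] //.
rewrite binS bin1 mulnDl PoszD IH; lia.
Qed.

Lemma EN_aux (k i : nat) (bk bj : int) (C : nat) : (0 < k)%N -> (i <= 2 * k)%N ->
  bk * 2 = k%:Z * (k%:Z + 1) -> bj * 2 = (i%:Z - k%:Z) * (i%:Z - k%:Z + 1) ->
  (C * 2)%:Z = i%:Z * (i%:Z - 1) -> 0 <= bk -> 0 <= bj ->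
  (k * k + absz ((bk + bj)%R) = 2 * k + (C + k.-1 * (2 * k - i)))%N.
Proof.
move=> hk hi e1 e2 c1 g1 g2.
have pm : forall m n : nat, ((m * n)%N)%:Z = m%:Z * n%:Z by move=> m n; exact: PoszM.
have f1 : (k.-1 * (2 * k - i))%N%:Z = 2 * (k%:Z * k%:Z) - k%:Z * i%:Z - 2 * k%:Z + i%:Z.
  clear -hk hi. nia.
have f2 : bk * 2 = k%:Z * k%:Z + k%:Z by rewrite e1; ring.
have f3 : bj * 2 = i%:Z * i%:Z - 2 * (k%:Z * i%:Z) + k%:Z * k%:Z + i%:Z - k%:Z by rewrite e2; ring.
have f4 : C%:Z * 2 = i%:Z * i%:Z - i%:Z by clear -c1; lia.
apply/eqP; rewrite -eqz_nat; apply/eqP.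
rewrite !PoszD (pm k k) gez0_abs; last by lia.
rewrite f1.
move: f2 f3 f4; move: (k%:Z * k%:Z) (k%:Z * i%:Z) (i%:Z * i%:Z) => KK KI II f2 f3 f4.
lia.
Qed.

Lemma alt_zero k : (0 < k)%N ->
  \sum_(i < (2 * k).+1) (-1) ^+ i * 'X^(absz (binom2 k%:Z + binom2 (i%:Z - k%:Z)))
     * qbin (2 * k) i = 0 :> {poly int}.
Proof.
move=> hk.
have H0 : \sum_(i < (2 * k).+1) qt (2 * k) k.-1 i = 0.
  rewrite qbin_thm.
  have hlt : (k.-1 < 2 * k)%N by lia.
  by rewrite (bigD1 (Ordinal hlt)) //= subrr mul0r.
have : 'X^(k * k) * \sum_(i < (2 * k).+1) (-1) ^+ i *
    'X^(absz (binom2 k%:Z + binom2 (i%:Z - k%:Z))) * qbin (2 * k) i = 0 :> {poly int}.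
  transitivity ('X^(2 * k) * \sum_(i < (2 * k).+1) qt (2 * k) k.-1 i); last by rewrite H0 mulr0.
  rewrite !mulr_sumr.
  apply: eq_bigr => i _; rewrite /qt.
  have hi := ltn_ord i.
  have e1 := binom2E k%:Z; have e2 := binom2E (i%:Z - k%:Z).
  have g1 := binom2_ge0 k%:Z; have g2 := binom2_ge0 (i%:Z - k%:Z).
  have c1 := bin2E i.
  have EN : (k * k + absz ((binom2 k%:Z + binom2 (i%:Z - k%:Z))%R) =
             2 * k + ('C(i, 2) + k.-1 * (2 * k - i)))%N.
    by apply: EN_aux => //; rewrite -ltnS.
  transitivity ((-1) ^+ i * ('X^(k * k) * 'X^(absz (binom2 k%:Z + binom2 (i%:Z - k%:Z))))
     * qbin (2 * k) i); first by ring.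
  rewrite -exprD EN exprD; ring.
move/eqP; rewrite mulf_eq0 expf_eq0 polyX_eq0 andbF /=.
by move/eqP.
Qed.

Lemma reindex_sum (V : zmodType) (F : int -> V) k :
  \sum_(t < k.+1) F t%:Z + \sum_(t < k) F (- (t.+1)%:Z) =
  \sum_(i < (2 * k).+1) F (i%:Z - k%:Z).
Proof.
rewrite -(big_mkord xpredT (fun i : nat => F (i%:Z - k%:Z))).
rewrite (@big_cat_nat _ _ _ k 0 (2 * k).+1) /=; [|lia|lia].
rewrite addrC; congr (_ + _).
  rewrite (big_addn 0 (2 * k).+1 k).
  have -> : ((2 * k).+1 - k = k.+1)%N by lia.
  rewrite big_mkord; apply: eq_bigr => i _; congr F; lia.
rewrite big_nat_rev big_mkord; apply: eq_bigr => i _.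
have hi := ltn_ord i; congr F; lia.
Qed.

Definition Xq (k : nat) (j : int) : laurent :=
  lmul (lmono (binom2 k%:Z + binom2 j) ((-1) ^ (k%:Z + j)))
       (lmul (pinv (qpoch (absz (k%:Z + j)))) (pinv (qpoch (absz (k%:Z - j))))).

Lemma rtermE a j k : rterm a j k =
  if `|j| <= k%:Z then lopp (lmul (a (- (k%:Z) - 1)) (Xq k j)) else lzero.
Proof. by []. Qed.

Lemma pinv_val f : val_ge (pinv f) 0.
Proof. exact: val_ge_fst. Qed.

Lemma Xq_val k j : val_ge (Xq k j) (binom2 k%:Z + binom2 j).
Proof.
rewrite -[X in val_ge _ X]addr0; apply: val_lmul.
  by apply: val_ge_fst.
by rewrite -(addr0 0); apply: val_lmul; apply: pinv_val.
Qed.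

Lemma Xq_val0 k j : val_ge (Xq k j) 0.
Proof.
apply: val_ge_mono (Xq_val k j) _.
by have := binom2_ge0 k%:Z; have := binom2_ge0 j; lia.
Qed.

Definition Vp N m := pf N (pinv (qpoch m)).

Lemma VP N m : tr N (Vp N m * Pq m) = tr N 1.
Proof.
rewrite -tr_mulr -pf_qpoch /Vp pf_pinv //; last exact: coef_qpoch0.
by apply: val_ge_fst; rewrite qpoch_fst.
Qed.

Lemma VV N n i : (i <= n)%N ->
  tr N (Vp N i * Vp N (n - i)) = tr N (qbin n i * Vp N n).
Proof.
move=> hi.
transitivity (tr N (Vp N i * Vp N (n - i) * tr N 1)); first by rewrite tr_mulr mulr1.
rewrite -(VP N n) tr_mulr -(@qbin_prod n i hi).
have -> : Vp N i * Vp N (n - i) * (Vp N n * (Pq i * Pq (n - i) * qbin n i)) =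
  (Vp N i * Pq i) * ((Vp N (n - i) * Pq (n - i)) * (qbin n i * Vp N n)) by ring.
by rewrite -tr_mull VP tr_mull mul1r -tr_mull VP tr_mull mul1r.
Qed.

Lemma pf_Xq N k (i : nat) : (i <= 2 * k)%N ->
  pf N (Xq k (i%:Z - k%:Z)) = tr N ((-1) ^+ i *
     'X^(absz (binom2 k%:Z + binom2 (i%:Z - k%:Z))) * (qbin (2 * k) i * Vp N (2 * k))).
Proof.
move=> hi.
rewrite /Xq pf_lmul; last 2 first.
- by apply: val_ge_fst => /=; have := binom2_ge0 k%:Z; have := binom2_ge0 (i%:Z - k%:Z); lia.
- by rewrite -(addr0 0); apply: val_lmul; apply: pinv_val.
rewrite pf_lmul; try exact: pinv_val.
rewrite pf_lmono; last by have := binom2_ge0 k%:Z; have := binom2_ge0 (i%:Z - k%:Z); lia.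
have -> : absz ((k%:Z + (i%:Z - k%:Z))%R) = i by lia.
have -> : absz ((k%:Z - (i%:Z - k%:Z))%R) = (2 * k - i)%N by lia.
have -> : k%:Z + (i%:Z - k%:Z) = i%:Z by lia.
rewrite -/(Vp N i) -/(Vp N (2 * k - i)).
rewrite VV // -trM.
congr tr; congr (_ * _ * _).
by rewrite rmorphXn /= polyCN polyC1.
Qed.

Lemma Xsum k m : (0 < k)%N ->
  \sum_(t < k.+1) coef (Xq k t%:Z) m + \sum_(t < k) coef (Xq k (- (t.+1)%:Z)) m = 0.
Proof.
move=> hk.
rewrite (@reindex_sum _ (fun j => coef (Xq k j) m) k).
case: (ltP m 0) => hm.
  by rewrite big1 // => i _; rewrite Xq_val0.
have [m' ->] : exists m' : nat, m = m'%:Z by exists (absz m); lia.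
transitivity ((\sum_(i < (2 * k).+1) pf m'.+1 (Xq k (i%:Z - k%:Z)))`_m').
  by rewrite coef_sum; apply: eq_bigr => i _; rewrite coef_pf ltnSn.
rewrite (eq_bigr (fun i : 'I_(2 * k).+1 => tr m'.+1 ((-1) ^+ i *
     'X^(absz (binom2 k%:Z + binom2 (i%:Z - k%:Z))) * (qbin (2 * k) i * Vp m'.+1 (2 * k)))));
  last by move=> i _; rewrite pf_Xq // -ltnS.
rewrite -tr_sum.
have -> : \sum_(i < (2 * k).+1) (-1) ^+ i *
     'X^(absz (binom2 k%:Z + binom2 (i%:Z - k%:Z))) * (qbin (2 * k) i * Vp m'.+1 (2 * k)) =
  (\sum_(i < (2 * k).+1) (-1) ^+ i *
     'X^(absz (binom2 k%:Z + binom2 (i%:Z - k%:Z))) * qbin (2 * k) i) * Vp m'.+1 (2 * k).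
  by rewrite mulr_suml; apply: eq_bigr => i _; rewrite mulrA.
by rewrite alt_zero // mul0r tr0 coef0.
Qed.

Lemma X00 m : coef (Xq 0 0) m = (m == 0)%:R.
Proof.
case: (ltP m 0) => hm.
  rewrite Xq_val0 //; case: eqP => //; lia.
have [m' ->] : exists m' : nat, m = m'%:Z by exists (absz m); lia.
have := coef_pf m'.+1 (Xq 0 0) m'; rewrite ltnSn => <-.
rewrite /Xq pf_lmul; last 2 first.
- by apply: val_ge_fst.
- by rewrite -(addr0 0); apply: val_lmul; apply: pinv_val.
rewrite pf_lmul; try exact: pinv_val.
rewrite pf_lmono // -/(Vp _ 0) -trM.
set N := m'.+1.
have V1 : tr N (Vp N 0) = tr N 1 by rewrite -(VP N 0) Pq0' mulr1.
have VV1 : tr N (Vp N 0 * Vp N 0) = tr N 1 by rewrite trM V1 -trM mulr1.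
rewrite trM VV1 -trM mulr1.
have b0 : binom2 0 = 0 by rewrite /binom2 mul0r div0z.
rewrite b0 addr0 expr0z polyC1 mul1r expr0 coef_tr ltnSn coef1.
by have -> : (m'%:Z == 0) = (m' == 0)%N by apply/eqP/eqP; lia.
Qed.

Lemma coef_pair (C : int) f n : coef (C, f) n = if n < C then 0 else f n.
Proof. by []. Qed.

Lemma sum_trunc (G : nat -> int) K L : (L <= K)%N ->
  (forall t, (L <= t)%N -> G t = 0) -> \sum_(t < K) G t = \sum_(t < L) G t.
Proof.
move=> hLK hG; rewrite [RHS](big_ord_widen _ _ hLK) [RHS]big_mkcond /=.
by apply: eq_bigr => t _; case: ifP => // h; rewrite hG //; lia.
Qed.

Lemma hasSumN_gen (F : nat -> laurent) (C : int) :
  (forall t n, n <= t%:Z + C -> coef (F t) n = 0) ->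
  HasSumN F (C, fun n => \sum_(t < absz (n - C)) coef (F t) n).
Proof.
move=> hF N; exists (absz (N - C)) => M' hM n hn.
rewrite coef_psum coef_pair; case: ifP => hnC.
  by rewrite big1 // => t _; apply: hF; lia.
apply: (@sum_trunc (fun t => coef (F t) n)); first by lia.
by move=> t ht; apply: hF; lia.
Qed.

Lemma isumD a b (F G : int -> int) :
  isum a b F + isum a b G = isum a b (fun i => F i + G i).
Proof. by rewrite /isum; case: ifP => _; rewrite ?addr0 // -big_split. Qed.

Lemma hval_a (a : int -> laurent) C :
  (forall n : int, n < 0 -> val_ge (a n) (- divz (n * (n + 3)) 2 + C)) ->
  forall k : nat, val_ge (a (- k%:Z - 1)) (- binom2 k%:Z + k%:Z + 1 + C).
Proof.
move=> H k.
have E : divz ((- k%:Z - 1) * (- k%:Z - 1 + 3)) 2 = binom2 k%:Z - k%:Z - 1.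
  have e := binom2E k%:Z.
  have -> : (- k%:Z - 1) * (- k%:Z - 1 + 3) = (binom2 k%:Z - k%:Z - 1) * 2.
    by rewrite !mulrBl e; ring.
  by rewrite mulzK.
apply: val_ge_mono (H _ _) _; first by lia.
by rewrite E; lia.
Qed.


Lemma R_val (a : int -> laurent) (C : int) (Ha : forall k : nat, val_ge (a (- k%:Z - 1)) (- binom2 k%:Z + k%:Z + 1 + C)) j k : val_ge (rterm a j k) (k%:Z + 1 + C).
Proof.
rewrite rtermE; case: ifP => _; last by move=> n _; rewrite coef_lzero.
move=> n hn; rewrite coef_lopp; apply/eqP; rewrite oppr_eq0; apply/eqP.
apply: (val_lmul _ _ _ _ (Ha k) (Xq_val k j) n).
by have := binom2_ge0 j; lia.
Qed.

Lemma R_big (a : int -> laurent) j k n : k%:Z < `|j| -> coef (rterm a j k) n = 0.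
Proof.
move=> h; rewrite rtermE ifF ?coef_lzero //; lia.
Qed.

Definition rr (a : int -> laurent) (C : int) (j : int) : laurent :=
  (C, fun n => \sum_(k < absz (n - C)) coef (rterm a j k) n).

Lemma rr_val (a : int -> laurent) (C : int) (Ha : forall k : nat, val_ge (a (- k%:Z - 1)) (- binom2 k%:Z + k%:Z + 1 + C)) j n : n <= `|j| + C -> coef (rr a C j) n = 0.
Proof.
move=> hn; rewrite coef_pair; case: ifP => // _.
apply: big1 => k _.
case: (ltP k%:Z `|j|) => hk; first exact: R_big.
by apply: (R_val _ _ Ha j k n); lia.
Qed.

Lemma Zk_pos (a : int -> laurent) k n : (0 < k)%N ->
  \sum_(t < k.+1) coef (rterm a t%:Z k) n + \sum_(t < k) coef (rterm a (- (t.+1)%:Z) k) n = 0.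
Proof.
move=> hk.
set A := a (- k%:Z - 1).
have E1 : forall t : 'I_k.+1, coef (rterm a t%:Z k) n =
    - isum A.1 n (fun i => coef A i * coef (Xq k t%:Z) (n - i)).
  move=> t; have ht := ltn_ord t.
  by rewrite rtermE ifT; [rewrite coef_lopp coef_lmul_gen //; exact: Xq_val0 | lia].
have E2 : forall t : 'I_k, coef (rterm a (- (t.+1)%:Z) k) n =
    - isum A.1 n (fun i => coef A i * coef (Xq k (- (t.+1)%:Z)) (n - i)).
  move=> t; have ht := ltn_ord t.
  by rewrite rtermE ifT; [rewrite coef_lopp coef_lmul_gen //; exact: Xq_val0 | lia].
rewrite (eq_bigr _ (fun t _ => E1 t)) (eq_bigr _ (fun t _ => E2 t)).
rewrite !sumrN !isum_sumr -opprD isumD; apply/eqP; rewrite oppr_eq0; apply/eqP.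
apply: isum0 => i _.
by rewrite -!mulr_sumr -mulrDr Xsum // mulr0.
Qed.

Lemma Z0 (a : int -> laurent) n : coef (rterm a (0%N)%:Z 0) n = - coef (a (-1)) n.
Proof.
rewrite rtermE normr0 lexx coef_lopp coef_lmul_gen; last exact: Xq_val0.
congr (- _).
have -> : - (0%N)%:Z - 1 = -1 by [].
set A := a (-1).
rewrite (@isum_supp _ _ n n); first by rewrite isum1 X00 subrr eqxx mulr1.
  move=> i; rewrite X00 mulf_eq0 negb_or => /andP[h1 h2].
  have := coef_nz h1; move: h2; case: eqP => // h _; lia.
move=> i; rewrite X00 mulf_eq0 negb_or => /andP[h1 h2].
move: h2; case: eqP => // h _; lia.
Qed.


Lemma coef_pair_lt (C : int) (f : int -> int) n : n < C -> coef (C, f) n = 0.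
Proof. by rewrite /coef /= => ->. Qed.

Lemma coef_pair_ge (C : int) (f : int -> int) n : C <= n -> coef (C, f) n = f n.
Proof. by rewrite /coef /= ltNge => ->. Qed.

Theorem proposition5p6 (a : int -> laurent)
  (Hlb : exists C : int, forall n : int, n < 0 ->
           val_ge (a n) (- divz (n * (n + 3)) 2 + C)) :
  exists r : int -> laurent,
    (forall j : int, HasSumN (rterm a j) (r j)) /\
    HasSumZ r (lopp (a (-1))).
Proof.
case: Hlb => C HC.
have Ha := hval_a _ _ HC.
have H1 : val_ge (a (-1)) (1 + C).
  have := Ha 0%N.
  have -> : - (0%N)%:Z - 1 = -1 by [].
  have -> : binom2 0 = 0 by rewrite /binom2 mul0r div0z.
  by rewrite oppr0 add0r.
exists (rr a C); split.
  move=> j; apply: hasSumN_gen => t n hn.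
  by apply: (R_val _ _ Ha j t n); lia.
pose f1 := fun n => \sum_(t < absz (n - C)) coef (rr a C t%:Z) n.
pose f2 := fun n => \sum_(t < absz (n - C)) coef (rr a C (- (t.+1)%:Z)) n.
exists (C, f1), (C, f2).
split.
  by apply: hasSumN_gen => t n hn; apply: (rr_val _ _ Ha); lia.
split.
  by apply: (@hasSumN_gen (fun t => rr a C (- (t.+1)%:Z))) => t n hn; apply: (rr_val _ _ Ha); lia.
move=> n; rewrite (coef_lopp (a (-1))).
case: (ltP n C) => hnC.
  rewrite [X in _ = X + _](@coef_pair_lt C f1 n hnC) [X in _ = _ + X](@coef_pair_lt C f2 n hnC).
  by rewrite addr0 H1 ?oppr0 //; lia.
rewrite [X in _ = X + _](@coef_pair_ge C f1 n hnC) [X in _ = _ + X](@coef_pair_ge C f2 n hnC) /f1 /f2.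
set K := absz (n - C).
have E1 : forall j, coef (rr a C j) n = \sum_(k < K) coef (rterm a j k) n.
  by move=> j; rewrite /rr (@coef_pair_ge C _ n hnC).
rewrite [X in _ = X + _](eq_bigr _ (fun (t : 'I_K) _ => E1 t%:Z)).
rewrite [X in _ = _ + X](eq_bigr _ (fun (t : 'I_K) _ => E1 (- (t.+1)%:Z))).
rewrite [X in _ = X + _]exchange_big [X in _ = _ + X]exchange_big /=.
rewrite -big_split /=.
have E2 : forall k : 'I_K,
   \sum_(t < K) coef (rterm a t%:Z k) n + \sum_(t < K) coef (rterm a (- (t.+1)%:Z) k) n =
   \sum_(t < k.+1) coef (rterm a t%:Z k) n + \sum_(t < k) coef (rterm a (- (t.+1)%:Z) k) n.
  move=> k; have hk := ltn_ord k.
  rewrite [X in X + _ = _](@sum_trunc (fun t => coef (rterm a t%:Z k) n) K k.+1) //; last first.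
    by move=> t ht; apply: R_big; lia.
  rewrite [X in _ + X = _](@sum_trunc (fun t => coef (rterm a (- (t.+1)%:Z) k) n) K k) //; last first.
    by move=> t ht; apply: R_big; lia.
  by apply: ltnW.
rewrite (eq_bigr _ (fun k _ => E2 k)).
case E : K => [|K'].
  rewrite big_ord0 H1 ?oppr0 //; move: E; rewrite /K; lia.
rewrite big_ord_recl [X in _ = X + _]/= big_ord1 big_ord0 addr0 (Z0 a n) big1 ?addr0 //.
by move=> k _; apply: Zk_pos.
Qed.
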